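(* Let $n\ge 2$ and let $\theta$ be a Schwartz function on $\mathbb{R}^n$ whose Fourier transform $\widehat\theta$ is supported in $\mathcal{A}_{4^{-n-3},4\sqrt n}$ and equals $1$ on $\mathcal{A}_{4^{-n-2},2\sqrt n}$. There exists $\epsilon_1>0$ such that for every sufficiently large $R$ the following holds: for each $x\in\mathcal{A}_{4^{-n-2},2\sqrt n}$, each $t\in(0,1)$ and each $\xi'\in\mathbb{R}^n$ with $|\xi'|\le\epsilon_1R$, $$\Big|\int_{\mathbb{R}^n} e^{2\pi i\left[(x-\frac{2t\xi'}{R})\cdot\xi-\frac{t}{R}|\xi|^2\right]}\theta(\xi)\,d\xi-1\Big|<\frac12.$$
   Context: For $0<u<v$, $\mathcal{A}_{u,v}=\{x\in\mathbb{R}^n: u<|x|<v\}$. The Fourier transform is $\widehat f(\xi)=\int f(x)e^{-2\pi i x\cdot\xi}dx$. *)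

(* Defs.v *)
From HB Require Import structures.
From mathcomp Require Import all_boot all_order all_algebra.
From mathcomp Require Import all_classical all_reals all_analysis.

Set Implicit Arguments.
Unset Strict Implicit.
Unset Printing Implicit Defensive.
Import Order.TTheory GRing.Theory Num.Theory.
Import numFieldNormedType.Exports.
Local Open Scope classical_set_scope.
Local Open Scope ring_scope.

Section Defs.
Variable R : realType.

Definition dotv (n : nat) (x y : 'rV[R]_n) : R := \sum_(i < n) x ord0 i * y ord0 i.
Definition enorm (n : nat) (x : 'rV[R]_n) : R := Num.sqrt (dotv x x).

Definition annulus (n : nat) (u v : R) : set 'rV[R]_n :=
  [set x | u < enorm x < v].

Definition vcons (n : nat) (s : R) (v : 'rV[R]_n) : 'rV[R]_n.+1 :=
  \row_(i < n.+1) match unlift ord0 i with Some j => v ord0 j | None => s end.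

(* Lebesgue integral over R^n, computed as the iterated Lebesgue integral
   (coordinate by coordinate); by Fubini this is the Lebesgue integral on R^n
   for every integrable function (the only case used below). *)
Fixpoint integralRn (n : nat) : ('rV[R]_n -> R) -> R :=
  match n return ('rV[R]_n -> R) -> R with
  | 0 => fun f => f 0
  | n'.+1 => fun f =>
      Rintegral (@lebesgue_measure R) setT
        (fun s : R => integralRn (fun v : 'rV[R]_n' => f (vcons s v)))
  end.

Fixpoint pderiv (n : nat) (l : seq 'I_n) (f : 'rV[R]_n -> R) : 'rV[R]_n -> R :=
  match l with
  | [::] => f
  | i :: l' => fun x => 'D_(delta_mx 0 i : 'rV[R]_n) (pderiv l' f) x
  end.

Definition schwartz (n : nat) (f : 'rV[R]_n -> R) : Prop :=
  (forall (l : seq 'I_n) (x : 'rV[R]_n), differentiable (pderiv l f) x) /\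
  (forall (a : 'I_n -> nat) (l : seq 'I_n), exists C : R, forall x : 'rV[R]_n,
      `| (\prod_(i < n) x ord0 i ^+ a i) * pderiv l f x | <= C).

(* A complex-valued function on R^n is represented by its real part fr and
   imaginary part fi.  Complex modulus: *)
Definition cmod (a b : R) : R := Num.sqrt (a ^+ 2 + b ^+ 2).

(* Fourier transform  \hat f(xi) = \int f(x) e^{-2 pi i x.xi} dx,
   real and imaginary parts, for f = fr + i fi. *)
Definition fourier_re (n : nat) (fr fi : 'rV[R]_n -> R) (xi : 'rV[R]_n) : R :=
  integralRn (fun x => fr x * cos (2 * pi * dotv x xi) + fi x * sin (2 * pi * dotv x xi)).
Definition fourier_im (n : nat) (fr fi : 'rV[R]_n -> R) (xi : 'rV[R]_n) : R :=
  integralRn (fun x => fi x * cos (2 * pi * dotv x xi) - fr x * sin (2 * pi * dotv x xi)).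

(* \int e^{i phi(xi)} f(xi) dxi, real and imaginary parts, f = fr + i fi *)
Definition oscint_re (n : nat) (phi fr fi : 'rV[R]_n -> R) : R :=
  integralRn (fun xi => fr xi * cos (phi xi) - fi xi * sin (phi xi)).
Definition oscint_im (n : nat) (phi fr fi : 'rV[R]_n -> R) : R :=
  integralRn (fun xi => fr xi * sin (phi xi) + fi xi * cos (phi xi)).

End Defs.

(* Main.v *)
Require Import Defs.
From HB Require Import structures.
From mathcomp Require Import all_boot all_order all_algebra.
From mathcomp Require Import all_classical all_reals all_analysis.
From mathcomp Require Import measurable_realfun.
From mathcomp Require Import ring lra.
Import Order.TTheory GRing.Theory Num.Theory.
Import numFieldNormedType.Exports.
Local Open Scope classical_set_scope.
Local Open Scope ring_scope.
Set Implicit Arguments.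
Unset Strict Implicit.
Unset Printing Implicit Defensive.

Section P1.
Variable R : realType.
Local Notation mu := (@lebesgue_measure R).

Definition qv (s : R) : R := (1 + s ^+ 2)^-1.

Lemma qv_gt0 s : 0 < qv s.
Proof. by rewrite /qv invr_gt0 ltr_pwDl// sqr_ge0. Qed.

Lemma qv_le1 s : qv s <= 1.
Proof. by rewrite /qv invf_le1 ?lerDl ?sqr_ge0 // ltr_pwDl // sqr_ge0. Qed.

Lemma qv_cont : continuous qv.
Proof. exact: continuous_oneDsqrV. Qed.

Lemma qv_meas : measurable_fun setT qv.
Proof. exact: continuous_measurable_fun qv_cont. Qed.

Lemma qv_integrable : mu.-integrable setT (EFin \o qv).
Proof.
apply/integrableP; split; first by apply/measurable_EFinP; exact: qv_meas.
have -> : (setT : set R) = `]-oo, (- 0)%R] `|` `]0, +oo[.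
  apply/seteqP; split=> x // _; rewrite /= oppr0 !in_itv /= andbT.
  by case: (leP x 0) => h; [left|right].
under eq_integral do rewrite /= ger0_norm ?(ltW (qv_gt0 _))//.
rewrite ge0_integral_setU //=; last 3 first.
- by apply/measurable_EFinP; apply: measurable_funTS; exact: qv_meas.
- by move=> x _; rewrite lee_fin ltW// qv_gt0.
- apply/disj_setPS => x [] /=; rewrite oppr0 !in_itv /= andbT => h1 h2.
  by move: (le_lt_trans h1 h2); rewrite ltxx.
rewrite ge0_integration_by_substitutionNy; last 2 first.
- by apply: continuous_subspaceT => x; exact: qv_cont.
- by move=> x _; rewrite ltW// qv_gt0.
have E : (\int[mu]_(x in `[0%R, +oo[) ((qv \o -%R) x)%:E)%E = (pi / 2)%:E.
  rewrite -integral0y_oneDsqr; apply: eq_integral => x _.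
  by rewrite /= /qv /oneDsqr sqrrN.
rewrite E.
apply: (@le_lt_trans _ _ ((pi/2)%:E + (pi/2)%:E)%E); last by rewrite -EFinD ltry.
apply: leeD => //.
rewrite -integral0y_oneDsqr; apply: ge0_subset_integral => //=.
- by apply/measurable_EFinP; apply: measurable_funTS; exact: qv_meas.
- by move=> x _; rewrite lee_fin invr_ge0 /oneDsqr addr_ge0 ?sqr_ge0.
- by move=> x /=; rewrite !in_itv /= !andbT; apply: ltW.
Qed.
End P1.
Section P2.
Variable R : realType.
Local Notation mu := (@lebesgue_measure R).

Lemma Rint_integrable (f g : R -> R) : measurable_fun setT f ->
  mu.-integrable setT (EFin \o g) -> (forall x, `|f x| <= g x) ->
  mu.-integrable setT (EFin \o f).
Proof.
move=> mf ig fg; apply: (le_integrable _ _ _ ig) => //.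
  by apply/measurable_EFinP.
move=> x _; rewrite /= lee_fin (le_trans (fg x))//.
exact: ler_norm.
Qed.

Lemma Rdct (fk : nat -> R -> R) (f g : R -> R) : (forall k, measurable_fun setT (fk k)) ->
  measurable_fun setT f -> (forall x, fk k x @[k --> \oo] --> f x) ->
  mu.-integrable setT (EFin \o g) -> (forall k x, `|fk k x| <= g x) ->
  (forall x, `|f x| <= g x) ->
  Rintegral mu setT (fk k) @[k --> \oo] --> Rintegral mu setT f.
Proof.
move=> mfk mf cf ig fkg fg.
have intf : mu.-integrable setT (EFin \o f) by exact: Rint_integrable ig fg.
apply: fine_cvg; rewrite fineK; last exact: integrable_fin_num.
apply: (@dominated_cvg _ _ _ mu _ _ (fun k x => (fk k x)%:E) _ (EFin \o g)) => //=.
- by move=> k; apply: measurableT_comp => //; exact: mfk.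
- by move=> x _; apply: cvg_EFin; [exact: nearW| exact: cf].
- by move=> k x _; rewrite lee_fin.
Qed.
End P2.
Section P3.
Variable R : realType.
Local Notation mu := (@lebesgue_measure R).

Definition w n (x : 'rV[R]_n) : R := \prod_(i < n) qv (x ord0 i).
Definition cvgc n (u : nat -> 'rV[R]_n) (x : 'rV[R]_n) :=
  forall i, u k ord0 i @[k --> \oo] --> x ord0 i.
Definition scont n (f : 'rV[R]_n -> R) :=
  forall u x, cvgc u x -> f (u k) @[k --> \oo] --> f x.
Definition good n (f : 'rV[R]_n -> R) :=
  scont f /\ exists C, forall x, `|f x| <= C * w x.

Lemma w_gt0 n (x : 'rV[R]_n) : 0 < w x.
Proof. by apply: prodr_gt0 => i _; exact: qv_gt0. Qed.

Lemma vcons0 n s (v : 'rV[R]_n) : vcons s v ord0 ord0 = s.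
Proof. by rewrite /vcons mxE unlift_none. Qed.

Lemma vconsS n s (v : 'rV[R]_n) i : vcons s v ord0 (lift ord0 i) = v ord0 i.
Proof. by rewrite /vcons mxE liftK. Qed.

Lemma w_vcons n s (v : 'rV[R]_n) : w (vcons s v) = qv s * w v.
Proof.
rewrite /w big_ord_recl vcons0; congr (_ * _).
by apply: eq_bigr => i _; rewrite vconsS.
Qed.

Lemma cvgc_vcons1 n (sk : nat -> R) s (v : 'rV[R]_n) :
  sk k @[k --> \oo] --> s -> cvgc (fun k => vcons (sk k) v) (vcons s v).
Proof.
move=> hs i; rewrite /vcons; under eq_cvg do rewrite mxE.
rewrite mxE; case: (unlift ord0 i) => [j|] //; exact: cvg_cst.
Qed.

Lemma cvgc_vcons2 n s (u : nat -> 'rV[R]_n) v :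
  cvgc u v -> cvgc (fun k => vcons s (u k)) (vcons s v).
Proof.
move=> hu i; rewrite /vcons; under eq_cvg do rewrite mxE.
rewrite mxE; case: (unlift ord0 i) => [j|]; [exact: hu | exact: cvg_cst].
Qed.

Lemma C_ge0 n (f : 'rV[R]_n -> R) C : (forall x, `|f x| <= C * w x) -> 0 <= C.
Proof.
move=> h; have := le_trans (normr_ge0 (f 0)) (h 0).
by rewrite pmulr_lge0 // w_gt0.
Qed.

Lemma good_sec n (f : 'rV[R]_n.+1 -> R) s C : scont f ->
  (forall x, `|f x| <= C * w x) ->
  scont (fun v => f (vcons s v)) /\ forall v, `|f (vcons s v)| <= (C * qv s) * w v.
Proof.
move=> sf hC; split.
  by move=> u x hu; apply: sf; exact: cvgc_vcons2.
by move=> v; rewrite -mulrA -w_vcons.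
Qed.

End P3.

Section P4.
Variable R : realType.
Local Notation mu := (@lebesgue_measure R).

Definition IH n : Prop :=
 [/\ (forall f g : 'rV[R]_n -> R, good f -> good g ->
        integralRn (fun x => f x - g x) = integralRn f - integralRn g),
     (exists2 K : R, 0 <= K & forall (f : 'rV[R]_n -> R) (C : R), good f -> (forall x, `|f x| <= C * w x) ->
        `|integralRn f| <= C * K) &
     (forall (fk : nat -> 'rV[R]_n -> R) f C, (forall k, good (fk k)) -> good f ->
        (forall k x, `|fk k x| <= C * w x) -> (forall x, `|f x| <= C * w x) ->
        (forall x, fk k x @[k --> \oo] --> f x) ->
        integralRn (fk k) @[k --> \oo] --> integralRn f)].

Lemma IH0 : IH 0.
Proof.
split => /=.
- by [].
- by exists 1 => // f C _ h; have := h 0; rewrite /w big_ord0 !mulr1.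
- by move=> fk f C _ _ _ _ h; exact: h.
Qed.

Section Step.
Variable n : nat.
Hypothesis ih : IH n.

Let F (f : 'rV[R]_n.+1 -> R) (s : R) := integralRn (fun v => f (vcons s v)).

Lemma F_bound f C : good f -> (forall x, `|f x| <= C * w x) ->
  exists2 K, 0 <= K & forall s, `|F f s| <= C * K * qv s.
Proof.
case: ih => _ [K K0 bnd] _ [sf _] hC; exists K => // s.
have [h1 h2] := good_sec s sf hC.
rewrite -mulrA (mulrC K) mulrA; apply: bnd => //; split => //.
by exists (C * qv s).
Qed.


Lemma F_cont f : good f -> continuous (F f).
Proof.
case: ih => _ _ dct [sf [C hC]] s.
have C0 := C_ge0 hC.
apply/(@cvg_nbhsP _ R^o) => u us.
apply: (dct (fun k v => f (vcons (u k) v)) (fun v => f (vcons s v)) C).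
- move=> k; have [h1 h2] := good_sec (u k) sf hC; split => //.
  by exists (C * qv (u k)).
- have [h1 h2] := good_sec s sf hC; split => //.
  by exists (C * qv s).
- move=> k v; rewrite (le_trans (hC _))// w_vcons mulrA ler_wpM2r ?(ltW (w_gt0 _))//.
  by rewrite ler_piMr// qv_le1.
- move=> v; rewrite (le_trans (hC _))// w_vcons mulrA ler_wpM2r ?(ltW (w_gt0 _))//.
  by rewrite ler_piMr// qv_le1.
- by move=> v; apply: sf; exact: cvgc_vcons1.
Qed.

Lemma F_meas f : good f -> measurable_fun setT (F f).
Proof. by move=> gf; apply: continuous_measurable_fun; exact: F_cont. Qed.

Lemma cqv_integrable (c : R) : mu.-integrable setT (EFin \o (fun s => c * qv s)).
Proof.
have -> : EFin \o (fun s => c * qv s) = (fun s => c%:E * (EFin \o @qv R) s)%E.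
  by apply/funext => s.
exact/integrableZl/qv_integrable.
Qed.

Lemma F_int f : good f -> mu.-integrable setT (EFin \o F f).
Proof.
move=> gf; have [sf [C hC]] := gf.
have [K K0 hK] := F_bound gf hC.
exact: (Rint_integrable (F_meas gf) (cqv_integrable (C * K)) hK).
Qed.

End Step.

Lemma IHS n : IH n -> IH n.+1.
Proof.
move=> ih; have ih' := ih; case: ih' => lin [K K0 bnd] dct.
set J := Rintegral mu setT (@qv R).
have J0 : 0 <= J by apply: Rintegral_ge0 => s _; exact: ltW (qv_gt0 s).
have Fb : forall (f : 'rV[R]_n.+1 -> R) C, good f -> (forall x, `|f x| <= C * w x) ->
    forall s, `|integralRn (fun v => f (vcons s v))| <= C * K * qv s.
  move=> f C [sf _] hC s; have [h1 h2] := good_sec s sf hC.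
  rewrite -mulrA (mulrC K) mulrA; apply: bnd => //; split => //; by exists (C * qv s).
split.
- move=> f g gf gg /=.
  have [sf [Cf hf]] := gf; have [sg [Cg hg]] := gg.
  rewrite -RintegralB //; [|exact: F_int|exact: F_int].
  congr Rintegral; apply/funext => s; apply: lin.
  + have [h1 h2] := good_sec s sf hf; split => //; by exists (Cf * qv s).
  + have [h1 h2] := good_sec s sg hg; split => //; by exists (Cg * qv s).
- exists (K * J); first exact: mulr_ge0.
  move=> f C gf hC /=.
  have C0 := C_ge0 hC.
  rewrite (le_trans (le_normr_Rintegral _ (F_int ih gf)))//.
  have -> : C * (K * J) = Rintegral mu setT (fun s => C * K * qv s).
    by rewrite RintegralZl ?mulrA //; exact: qv_integrable.
  apply: le_Rintegral => //.
  + apply: (Rint_integrable _ (cqv_integrable (C * K))).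
      apply: measurableT_comp; [exact: normr_measurable|exact: F_meas].
    by move=> s; rewrite normr_id; exact: Fb.
  + exact: cqv_integrable.
  + by move=> s _; exact: Fb.
- move=> fk f C gfk gf hk hf cf /=.
  apply: (@Rdct R (fun k s => integralRn (fun v => fk k (vcons s v)))
     (fun s => integralRn (fun v => f (vcons s v))) (fun s => C * K * qv s)).
  + by move=> k; exact: (F_meas ih (gfk k)).
  + exact: (F_meas ih gf).
  + move=> s; apply: (dct (fun k v => fk k (vcons s v)) (fun v => f (vcons s v)) (C * qv s)).
    * move=> k; have [sk [Ck hCk]] := gfk k; have [h1 h2] := good_sec s sk hCk.
      by split => //; exists (Ck * qv s).
    * have [sk [Ck hCk]] := gf; have [h1 h2] := good_sec s sk hCk.
      by split => //; exists (Ck * qv s).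
    * by move=> k v; rewrite -mulrA -w_vcons; exact: hk.
    * by move=> v; rewrite -mulrA -w_vcons; exact: hf.
    * by move=> v; exact: cf.
  + exact: cqv_integrable.
  + by move=> k s; apply: Fb (gfk k) _ s.
  + by move=> s; apply: Fb gf _ s.
Qed.

Lemma IHall n : IH n.
Proof. by elim: n => [|n ihn]; [exact: IH0 | exact: IHS]. Qed.
End P4.

Section P5.
Variable R : realType.
Lemma cvgc_mx n (u : nat -> 'rV[R]_n) x : cvgc u x -> u k @[k --> \oo] --> x.
Proof.
move=> hu; apply/cvg_ballP => e e0.
have : forall i : 'I_n, \forall k \near \oo, ball (x ord0 i) e (u k ord0 i).
  by move=> i; have /cvg_ballP := hu i; apply.
move/filter_forall; apply: filterS => k hk.
split => // i j; rewrite [i]ord1; exact: hk.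
Qed.

Lemma scont_schwartz n (f : 'rV[R]_n -> R) : schwartz f -> scont f.
Proof.
move=> [hd _] u x hu.
have c := differentiable_continuous (hd [::] x).
exact: (cvg_comp _ _ (cvgc_mx hu) c).
Qed.

Lemma scont_cst n (c : R) : scont (fun _ : 'rV[R]_n => c).
Proof. by move=> u x _; exact: cvg_cst. Qed.

Lemma scont_coord n (i : 'I_n) : scont (fun x : 'rV[R]_n => x ord0 i).
Proof. by move=> u x hu; exact: hu. Qed.

Lemma scont_add n (f g : 'rV[R]_n -> R) : scont f -> scont g -> scont (fun x => f x + g x).
Proof. by move=> hf hg u x hu; apply: cvgD; [exact: hf | exact: hg]. Qed.

Lemma scont_sub n (f g : 'rV[R]_n -> R) : scont f -> scont g -> scont (fun x => f x - g x).
Proof. by move=> hf hg u x hu; apply: cvgB; [exact: hf | exact: hg]. Qed.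

Lemma scont_mul n (f g : 'rV[R]_n -> R) : scont f -> scont g -> scont (fun x => f x * g x).
Proof. by move=> hf hg u x hu; apply: cvgM; [exact: hf | exact: hg]. Qed.

Lemma scont_comp n (f : 'rV[R]_n -> R) (h : R -> R) : continuous h -> scont f ->
  scont (fun x => h (f x)).
Proof. by move=> ch hf u x hu; exact: (cvg_comp _ _ (hf u x hu) (ch _)). Qed.

Lemma scont_sum n (F : 'I_n -> 'rV[R]_n -> R) : (forall i, scont (F i)) ->
  scont (fun x => \sum_(i < n) F i x).
Proof.
move=> hF u x hu; elim: (index_enum _) => [|i s ih].
  under eq_cvg do rewrite big_nil.
  by rewrite big_nil; exact: cvg_cst.
under eq_cvg do rewrite big_cons.
by rewrite big_cons; apply: cvgD => //; exact: hF.
Qed.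

Lemma scont_dotvl n (a : 'rV[R]_n) : scont (fun x => dotv a x).
Proof.
apply: scont_sum => i; apply: scont_mul; [exact: scont_cst | exact: scont_coord].
Qed.

Lemma scont_dotvv n : scont (fun x : 'rV[R]_n => dotv x x).
Proof.
apply: scont_sum => i; apply: scont_mul; exact: scont_coord.
Qed.

Lemma cos_lip (a b : R) : `|cos a - cos b| <= `|a - b|.
Proof.
wlog ab : a b / b <= a.
  move=> h; case: (leP b a) => [|/ltW] hab; first exact: h.
  by rewrite distrC (distrC a); exact: h.
have [c _ ->] := @MVT_segment R cos (fun x => - sin x) b a ab
  (fun x _ => is_derive_cos x) (continuous_subspaceT (fun x => @continuous_cos R x)).
by rewrite normrM ler_piMl // normrN sin_max.
Qed.

Lemma sin_lip (a b : R) : `|sin a - sin b| <= `|a - b|.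
Proof.
wlog ab : a b / b <= a.
  move=> h; case: (leP b a) => [|/ltW] hab; first exact: h.
  by rewrite distrC (distrC a); exact: h.
have [c _ ->] := @MVT_segment R sin cos b a ab
  (fun x _ => is_derive_sin x) (continuous_subspaceT (fun x => @continuous_sin R x)).
by rewrite normrM ler_piMl // cos_max.
Qed.

End P5.

Section P6.
Variable R : realType.

Definition Pn n (x : 'rV[R]_n) := \sum_(i < n) (1 + x ord0 i ^+ 2).

Lemma prod_ge1 n (x : 'rV[R]_n) (P : pred 'I_n) :
  1 <= \prod_(i < n | P i) (1 + x ord0 i ^+ 2).
Proof.
have := @ler_prod R _ (index_enum 'I_n) P (fun _ => 1) (fun i => 1 + x ord0 i ^+ 2).
rewrite big1_eq; apply => i _; by rewrite ler01 /= lerDl sqr_ge0.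
Qed.

Lemma schwartz_bound n (f : 'rV[R]_n -> R) : schwartz f ->
  exists A, forall x, `|f x| * Pn x <= A * w x.
Proof.
move=> [_ hb].
have [Cf hCf] := choice (fun a : 'I_n -> nat => hb a [::]).
set B := 2 ^+ n * \sum_(b : {ffun 'I_n -> bool}) Cf (fun i => if b i then 4%N else 0%N).
exists (n%:R * B) => x.
set Pi := \prod_(i < n) (1 + x ord0 i ^+ 2).
have Pi1 : 1 <= Pi by exact: prod_ge1.
have wPi : w x * Pi = 1.
  by rewrite /w /qv prodfV mulVf // gt_eqF // (lt_le_trans ltr01 Pi1).
have hP : Pn x <= n%:R * Pi.
  have -> : n%:R * Pi = \sum_(i < n) Pi by rewrite sumr_const card_ord mulr_natl.
  rewrite /Pn; apply: ler_sum => i _.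
  rewrite /Pi (bigD1 i) //= ler_peMr ?prod_ge1 //.
  by rewrite addr_ge0 ?sqr_ge0.
have hPi2 : `|f x| * Pi ^+ 2 <= B.
  have h1 : Pi ^+ 2 <= \prod_(i < n) (2 * \sum_(j : bool) x ord0 i ^+ (if j then 4%N else 0%N)).
    rewrite /Pi -prodrXl; apply: ler_prod => i _; rewrite sqr_ge0 /= big_bool /= expr0.
    rewrite (_ : x ord0 i ^+ 4 = (x ord0 i ^+ 2) ^+ 2); last by rewrite -exprM.
    set z := x ord0 i ^+ 2; rewrite -subr_ge0.
    by rewrite (_ : _ - _ = (1 - z) ^+ 2) ?sqr_ge0 //; ring.
  apply: (le_trans (ler_wpM2l (normr_ge0 _) h1)).
  rewrite big_split /= prodr_const card_ord bigA_distr_bigA /=.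
  rewrite mulrCA ler_wpM2l ?exprn_ge0 // mulr_sumr; apply: ler_sum => b _.
  have := hCf (fun i => if b i then 4%N else 0%N) x.
  move=> h; apply: le_trans h; rewrite /= normrM mulrC (ger0_norm (x := \prod_(i < n) _)) //.
  by apply: prodr_ge0 => i _; apply: exprn_even_ge0; case: (b i).
apply: (le_trans (ler_wpM2l (normr_ge0 _) hP)).
have -> : `|f x| * (n%:R * Pi) = n%:R * w x * (`|f x| * Pi ^+ 2).
  have E : forall a b c d : R, a * (b * d) * (c * d) = b * c * (a * d ^+ 2).
    by move=> a b c d; ring.
  by rewrite -[LHS]mulr1 -wPi; exact: E.
rewrite [X in _ <= X]mulrAC ler_wpM2l //.
by rewrite mulr_ge0 // ltW // w_gt0.
Qed.
End P6.

Section P7.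
Variable R : realType.

Lemma abs_le_1sq (a : R) : `|a| <= 1 + a ^+ 2.
Proof.
have h := sqr_ge0 (`|a| - 1).
rewrite sqrrB real_normK ?num_real // in h.
have h2 : 0 <= `|a| by [].
rewrite mulr1 expr1n in h.
lra.
Qed.

Lemma coord_le_enorm n (y : 'rV[R]_n) i : `|y ord0 i| <= enorm y.
Proof.
rewrite /enorm -sqrtr_sqr ler_wsqrtr // /dotv (bigD1 i) //= expr2 lerDl.
by apply: sumr_ge0 => j _; rewrite -expr2 sqr_ge0.
Qed.

Lemma dotv_le n (y z : 'rV[R]_n) : `|dotv y z| <= enorm y * Pn z.
Proof.
rewrite /dotv /Pn mulr_sumr (le_trans (ler_norm_sum _ _ _)) //.
apply: ler_sum => i _; rewrite normrM.
apply: ler_pM => //; [exact: coord_le_enorm | exact: abs_le_1sq].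
Qed.

Lemma dotvv_le n (z : 'rV[R]_n) : `|dotv z z| <= Pn z.
Proof.
rewrite /dotv /Pn (le_trans (ler_norm_sum _ _ _)) //.
by apply: ler_sum => i _; rewrite normrM -expr2 real_normK ?num_real // lerDr.
Qed.

Lemma dotvN n (x y : 'rV[R]_n) : dotv y (- x) = - dotv x y.
Proof. by rewrite /dotv -sumrN; apply: eq_bigr => i _; rewrite mxE mulrN mulrC. Qed.

Lemma dotvNN n (x : 'rV[R]_n) : dotv (- x) (- x) = dotv x x.
Proof. by rewrite /dotv; apply: eq_bigr => i _; rewrite mxE mulrNN. Qed.

Lemma dotvBZ n (x y z : 'rV[R]_n) c : dotv (x - c *: y) z = dotv x z - c * dotv y z.
Proof.
rewrite /dotv mulr_sumr -sumrB; apply: eq_bigr => i _; rewrite !mxE.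
by rewrite mulrBl mulrA.
Qed.

Lemma cmod_le (a b : R) : cmod a b <= `|a| + `|b|.
Proof.
rewrite /cmod -(ger0_norm (addr_ge0 (normr_ge0 a) (normr_ge0 b))) -sqrtr_sqr.
rewrite ler_wsqrtr // sqrrD !real_normK ?num_real //.
have h : 0 <= (`|a| * `|b|) *+ 2 by rewrite mulrn_wge0 // mulr_ge0.
lra.
Qed.

End P7.

Section P8.
Variable R : realType.
Variable n : nat.
Variables thr thi : 'rV[R]_n -> R.

Definition Pr (ph : 'rV[R]_n -> R) := fun xi => thr xi * cos (ph xi) - thi xi * sin (ph xi).
Definition Pim (ph : 'rV[R]_n -> R) := fun xi => thr xi * sin (ph xi) + thi xi * cos (ph xi).

Lemma Pr_bound ph xi : `|Pr ph xi| <= `|thr xi| + `|thi xi|.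
Proof.
rewrite /Pr (le_trans (ler_normB _ _)) // lerD // normrM.
  by rewrite ler_piMr // cos_max.
by rewrite ler_piMr // sin_max.
Qed.

Lemma Pim_bound ph xi : `|Pim ph xi| <= `|thr xi| + `|thi xi|.
Proof.
rewrite /Pim (le_trans (ler_normD _ _)) // lerD // normrM.
  by rewrite ler_piMr // sin_max.
by rewrite ler_piMr // cos_max.
Qed.

Lemma Pr_diff ph ph0 xi : `|Pr ph xi - Pr ph0 xi| <= (`|thr xi| + `|thi xi|) * `|ph xi - ph0 xi|.
Proof.
have -> : Pr ph xi - Pr ph0 xi =
  thr xi * (cos (ph xi) - cos (ph0 xi)) - thi xi * (sin (ph xi) - sin (ph0 xi)).
  by rewrite /Pr; ring.
rewrite (le_trans (ler_normB _ _)) // mulrDl lerD // normrM ler_wpM2l //.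
  exact: cos_lip.
exact: sin_lip.
Qed.

Lemma Pim_diff ph ph0 xi : `|Pim ph xi - Pim ph0 xi| <= (`|thr xi| + `|thi xi|) * `|ph xi - ph0 xi|.
Proof.
have -> : Pim ph xi - Pim ph0 xi =
  thr xi * (sin (ph xi) - sin (ph0 xi)) + thi xi * (cos (ph xi) - cos (ph0 xi)).
  by rewrite /Pim; ring.
rewrite (le_trans (ler_normD _ _)) // mulrDl lerD // normrM ler_wpM2l //.
  exact: sin_lip.
exact: cos_lip.
Qed.

Hypothesis sr : scont thr.
Hypothesis si : scont thi.

Lemma scont_Pr ph : scont ph -> scont (Pr ph).
Proof.
move=> sph; apply: scont_sub; apply: scont_mul => //;
  apply: scont_comp => //; [exact: continuous_cos | exact: continuous_sin].
Qed.

Lemma scont_Pim ph : scont ph -> scont (Pim ph).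
Proof.
move=> sph; apply: scont_add; apply: scont_mul => //;
  apply: scont_comp => //; [exact: continuous_sin | exact: continuous_cos].
Qed.

End P8.

Unset Implicit Arguments.

Theorem lemma2p2 (R : realType) (n : nat) (thr thi : 'rV[R]_n -> R) :
  (2 <= n)%N ->
  schwartz thr -> schwartz thi ->
  closure [set xi | fourier_re thr thi xi != 0 \/ fourier_im thr thi xi != 0]
    `<=` annulus ((4 : R) ^- (n + 3)) (4 * Num.sqrt (n%:R)) ->
  (forall xi, annulus ((4 : R) ^- (n + 2)) (2 * Num.sqrt (n%:R)) xi ->
     fourier_re thr thi xi = 1 /\ fourier_im thr thi xi = 0) ->
  exists eps1 : R, 0 < eps1 /\
    exists R0 : R, forall Rad : R, R0 <= Rad ->
      forall (x : 'rV[R]_n) (t : R) (xi' : 'rV[R]_n),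
        annulus ((4 : R) ^- (n + 2)) (2 * Num.sqrt (n%:R)) x ->
        0 < t < 1 ->
        enorm xi' <= eps1 * Rad ->
        let phi := fun xi : 'rV[R]_n =>
          2 * pi * (dotv (x - (2 * t / Rad) *: xi') xi - t / Rad * dotv xi xi) in
        cmod (oscint_re phi thr thi - 1) (oscint_im phi thr thi) < 1 / 2.
Proof.
move=> n2 hsr hsi _ H1.
have sr := scont_schwartz hsr; have si := scont_schwartz hsi.
have [Ar hAr] := schwartz_bound hsr; have [Ai hAi] := schwartz_bound hsi.
pose A := Ar + Ai.
have hT : forall xi, (`|thr xi| + `|thi xi|) * Pn xi <= A * w xi.
  by move=> xi; rewrite !mulrDl lerD.
have Pn1 : forall xi : 'rV[R]_n, 1 <= Pn xi.
  move=> xi; apply: (@le_trans _ _ n%:R).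
    by rewrite ler1n (leq_trans _ n2).
  have -> : n%:R = \sum_(i < n) (1 : R) by rewrite sumr_const card_ord.
  by apply: ler_sum => i _; rewrite lerDl sqr_ge0.
have hT1 : forall xi, `|thr xi| + `|thi xi| <= A * w xi.
  move=> xi; apply: le_trans (hT xi); apply: ler_peMr; [exact: addr_ge0 | exact: Pn1].
have A0 : 0 <= A.
  apply: (@C_ge0 R n (fun xi => `|thr xi| + `|thi xi|)) => xi.
  by rewrite ger0_norm ?addr_ge0 //; exact: hT1.
have [lin [K K0 bnd] _] := IHall R n.
pose M := A * K + 1.
have AK0 : 0 <= A * K by exact: mulr_ge0.
have AKM : A * K < M by rewrite /M; lra.
have M0 : 0 < M by rewrite /M; lra.
have pi0 : 0 < pi :> R by exact: pi_gt0.
have piM0 : 0 < pi * M by exact: mulr_gt0.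
exists ((32 * pi * M)^-1); split.
  by rewrite invr_gt0 -mulrA mulr_gt0.
exists (16 * pi * M) => Rad hRad x t xi' hx /andP[t0 t1] hxi'.
rewrite [X in is_true X]/=.
set phi := (fun xi : 'rV[R]_n => 2 * pi * _).
set c := 2 * t / Rad.
set eps := (32 * pi * M)^-1.
set D := 2 * pi * (2 * eps + Rad^-1).
have Rad0 : 0 < Rad by apply: lt_le_trans hRad; rewrite -mulrA mulr_gt0.
have eps0 : 0 < eps by rewrite /eps invr_gt0 -mulrA mulr_gt0.
have c0 : 0 <= c by rewrite /c divr_ge0 // ?mulr_ge0 // ltW.
have D0 : 0 < D.
  by rewrite /D mulr_gt0 ?mulr_gt0 // addr_gt0 ?mulr_gt0 // invr_gt0.
pose ph0 := fun xi : 'rV[R]_n => 2 * pi * dotv x xi.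
have hx' : annulus (4 ^- (n + 2)) (2 * Num.sqrt n%:R) (- x).
  by move: hx; rewrite /annulus /enorm /= dotvNN.
have [f1 f2] := H1 _ hx'.
have e1 : fourier_re thr thi (-x) = integralRn (Pr thr thi ph0).
  rewrite /fourier_re; congr integralRn; apply/funext => xi.
  by rewrite /Pr /ph0 dotvN mulrN cosN sinN mulrN.
have e2 : fourier_im thr thi (-x) = integralRn (Pim thr thi ph0).
  rewrite /fourier_im; congr integralRn; apply/funext => xi.
  by rewrite /Pim /ph0 dotvN mulrN cosN sinN mulrN opprK addrC.
have sphi : scont phi.
  apply: scont_mul; first exact: scont_cst.
  apply: scont_sub; first exact: scont_dotvl.
  apply: scont_mul; [exact: scont_cst | exact: scont_dotvv].
have sph0 : scont ph0.
  apply: scont_mul; [exact: scont_cst | exact: scont_dotvl].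
have gr : forall ph, scont ph -> good (Pr thr thi ph).
  move=> ph sph; split; first exact: scont_Pr.
  by exists A => xi; exact: le_trans (Pr_bound _ _ _ _) (hT1 xi).
have gi : forall ph, scont ph -> good (Pim thr thi ph).
  move=> ph sph; split; first exact: scont_Pim.
  by exists A => xi; exact: le_trans (Pim_bound _ _ _ _) (hT1 xi).
have hce : c * enorm xi' <= 2 * eps.
  have q : enorm xi' / Rad <= eps by rewrite ler_pdivrMr.
  have -> : c * enorm xi' = (2 * t) * (enorm xi' / Rad) by rewrite /c; ring.
  rewrite -mulrA ler_pM2l //.
  have q0 : 0 <= enorm xi' / Rad by rewrite divr_ge0 ?sqrtr_ge0 // ltW.
  by rewrite (le_trans (ler_wpM2r q0 (ltW t1))) // mul1r.
have hD : forall xi, `|phi xi - ph0 xi| <= D * Pn xi.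
  move=> xi; rewrite /phi /ph0 dotvBZ.
  have -> : 2 * pi * (dotv x xi - 2 * t / Rad * dotv xi' xi - t / Rad * dotv xi xi)
     - 2 * pi * dotv x xi = - (2 * pi) * (c * dotv xi' xi + t / Rad * dotv xi xi).
    by rewrite /c; ring.
  have pi20 : 0 <= 2 * pi :> R by apply: mulr_ge0 => //; exact: ltW.
  have tR0 : 0 <= t / Rad by apply: divr_ge0; exact: ltW.
  rewrite normrM normrN (ger0_norm pi20) /D -[X in _ <= X]mulrA.
  rewrite ler_wpM2l // mulrDl (le_trans (ler_normD _ _)) //.
  rewrite (normrM c) (normrM (t / Rad)) (ger0_norm c0) (ger0_norm tR0).
  apply: lerD.
    apply: (le_trans (ler_wpM2l c0 (dotv_le _ _))).
    by rewrite mulrA ler_wpM2r // (le_trans _ (Pn1 xi)).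
  apply: ler_pM; [exact: tR0 | exact: normr_ge0 | | exact: dotvv_le].
  by rewrite ler_pdivrMr // mulVf ?gt_eqF //; exact: ltW.
have hdr : forall xi, `|Pr thr thi phi xi - Pr thr thi ph0 xi| <= (D * A) * w xi.
  move=> xi; apply: le_trans (Pr_diff _ _ _ _ _) _.
  apply: (le_trans (ler_wpM2l (addr_ge0 (normr_ge0 _) (normr_ge0 _)) (hD xi))).
  rewrite mulrCA -mulrA; apply: ler_wpM2l; [exact: ltW | exact: hT].
have hdi : forall xi, `|Pim thr thi phi xi - Pim thr thi ph0 xi| <= (D * A) * w xi.
  move=> xi; apply: le_trans (Pim_diff _ _ _ _ _) _.
  apply: (le_trans (ler_wpM2l (addr_ge0 (normr_ge0 _) (normr_ge0 _)) (hD xi))).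
  rewrite mulrCA -mulrA; apply: ler_wpM2l; [exact: ltW | exact: hT].
have Ire : `|oscint_re phi thr thi - 1| <= D * A * K.
  rewrite -f1 e1 (_ : oscint_re phi thr thi = integralRn (Pr thr thi phi)) //.
  rewrite -lin; [|exact: gr|exact: gr].
  apply: (bnd _ _ _ hdr); split; first by apply: scont_sub; apply: scont_Pr.
  by exists (D * A).
have Iim : `|oscint_im phi thr thi| <= D * A * K.
  rewrite -[oscint_im _ _ _]subr0 -f2 e2.
  rewrite (_ : oscint_im phi thr thi = integralRn (Pim thr thi phi)) //.
  rewrite -lin; [|exact: gi|exact: gi].
  apply: (bnd _ _ _ hdi); split; first by apply: scont_sub; apply: scont_Pim.
  by exists (D * A).
have DM : D * M <= 1 / 4.
  have -> : D * M = 1 / 8 + 2 * pi * M / Rad.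
    rewrite /D /eps; move: (pi : R) pi0 => p p0; field.
    by rewrite !gt_eqF.
  have : 2 * pi * M / Rad <= 1 / 8.
    rewrite ler_pdivrMr //; lra.
  lra.
have DAK : D * A * K < 1 / 4.
  by rewrite -mulrA (lt_le_trans _ DM) // ltr_pM2l.
apply: (le_lt_trans (cmod_le _ _)); lra.
Qed.
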